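(* For every formula $\phi\in\mathbf{LTL}(\mathbf{X},\wedge)$ there exists a pattern $P$ which is equivalent to $\phi$ (i.e. for every word $w$ and position $i$, $w,i\models P$ iff $w,i\models\phi$) and whose size is at most the size of $\phi$.
   Context: Alphabet $\Sigma=\{a,b\}$. Words are nonempty, indexed from position 1; $w(i)$ is the letter at position $i$. $\mathbf{LTL}(\mathbf{X},\wedge)$ consists of formulas built from atomic formulas $c\in\Sigma$, conjunction $\wedge$ and the next operator $\mathbf{X}$. Semantics on a word $w$ of length $\ell$, position $i\in[1,\ell]$: $w,i\models c$ iff $w(i)=c$; $w,i\models\phi_1\wedge\phi_2$ iff both hold; $w,i\models\mathbf{X}\phi$ iff $i<\ell$ and $w,i+1\models\phi$. The size of a formula is the number of nodes of its syntax tree; $\mathbf{X}^i$ denotes $i$ nested applications of $\mathbf{X}$ (each contributing 1 to the size). Patterns are the formulas generated by the grammar $P ::= \mathbf{X}^i c \mid \mathbf{X}^i(c\wedge P)$ with $i\ge 0$, $c\in\Sigma$. Equivalently a pattern has the form $\mathbf{X}^{i_1-1}(c_1\wedge\mathbf{X}^{i_2-i_1}(\cdots\wedge\mathbf{X}^{i_p-i_{p-1}}c_p)\cdots)$ with $1\le i_1<\dots<i_p$ and $c_q\in\Sigma$; it has size $i_p+2(p-1)$. (A formula such as $a\wedge b$ is also a pattern and is unsatisfiable.) *)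

(* Defs.v *)
From Stdlib Require Import List Arith Lia.
Import ListNotations.

Inductive letter : Type := La | Lb.

Inductive formula : Type :=
| Atom : letter -> formula
| And : formula -> formula -> formula
| Next : formula -> formula.

(* Words are lists of letters; positions are indexed from 1:
   w(i) = nth (i-1) w. *)
Definition letter_at (w : list letter) (i : nat) : option letter :=
  nth_error w (i - 1).

Fixpoint sat (w : list letter) (i : nat) (phi : formula) : Prop :=
  match phi with
  | Atom c => letter_at w i = Some c
  | And f g => sat w i f /\ sat w i g
  | Next f => i < length w /\ sat w (S i) f
  end.

Fixpoint size (phi : formula) : nat :=
  match phi with
  | Atom _ => 1
  | And f g => 1 + size f + size g
  | Next f => 1 + size f
  end.

Fixpoint nextn (i : nat) (phi : formula) : formula :=
  match i with
  | 0 => phi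
  | S k => Next (nextn k phi)
  end.

Inductive is_pattern : formula -> Prop :=
| pat_atom : forall i c, is_pattern (nextn i (Atom c))
| pat_and : forall i c P, is_pattern P -> is_pattern (nextn i (And (Atom c) P)).

Definition equiv (phi psi : formula) : Prop :=
  forall (w : list letter) (i : nat),
    w <> [] -> 1 <= i <= length w -> (sat w i phi <-> sat w i psi).

(* Main.v *)
Require Import Defs.
From Stdlib Require Import List Arith Lia.
Import ListNotations.

Fixpoint req (f : formula) : list (nat * letter) :=
  match f with
  | Atom c => [(0, c)]
  | And f g => req f ++ req g
  | Next f => map (fun p => (S (fst p), snd p)) (req f)
  end.

Fixpoint nexts (f : formula) : nat :=
  match f with
  | Atom _ => 0
  | And f g => nexts f + nexts g
  | Next f => S (nexts f)
  end.

Lemma req_nonempty f : req f <> [].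
Proof.
  induction f; simpl; try discriminate.
  - destruct (req f1); simpl; [congruence|discriminate].
  - destruct (req f); simpl; [congruence|discriminate].
Qed.

Lemma size_req f : size f + 1 = 2 * length (req f) + nexts f.
Proof.
  induction f; simpl; try lia.
  - rewrite length_app; lia.
  - rewrite length_map; lia.
Qed.

Lemma req_bound f : forall p, In p (req f) -> fst p <= nexts f.
Proof.
  induction f; simpl; intros p H.
  - destruct H as [<-|[]]; simpl; lia.
  - apply in_app_or in H; destruct H as [H|H];
      [specialize (IHf1 p H)|specialize (IHf2 p H)]; lia.
  - apply in_map_iff in H. destruct H as [q [<- Hq]]. simpl.
    specialize (IHf q Hq); lia.
Qed.

Lemma letter_at_bound w j c : 1 <= j -> letter_at w j = Some c -> j <= length w.
Proof.
  unfold letter_at; intros Hj H.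
  assert (j - 1 < length w) by (apply nth_error_Some; congruence). lia.
Qed.

Lemma sat_bound f : forall w j, 1 <= j -> sat w j f -> j <= length w.
Proof.
  induction f; simpl; intros w j Hj H.
  - eapply letter_at_bound; eauto.
  - destruct H; eauto.
  - lia.
Qed.

Lemma req_sem f : forall w i, 1 <= i ->
  (sat w i f <-> forall p, In p (req f) -> letter_at w (i + fst p) = Some (snd p)).
Proof.
  induction f; simpl; intros w i Hi.
  - split.
    + intros H p [<-|[]]; simpl. rewrite Nat.add_0_r; auto.
    + intros H. specialize (H (0, l) (or_introl eq_refl)). simpl in H.
      rewrite Nat.add_0_r in H; auto.
  - rewrite IHf1, IHf2 by auto. split.
    + intros [H1 H2] p Hp. apply in_app_or in Hp. destruct Hp; auto.
    + intros H; split; intros p Hp; apply H; apply in_or_app; auto.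
  - rewrite IHf by lia. split.
    + intros [Hl H] p Hp. apply in_map_iff in Hp. destruct Hp as [q [<- Hq]].
      simpl. replace (i + S (fst q)) with (S i + fst q) by lia. auto.
    + intros H.
      assert (HH : forall q, In q (req f) -> letter_at w (S i + fst q) = Some (snd q)).
      { intros q Hq. replace (S i + fst q) with (i + fst (S (fst q), snd q)) by (simpl; lia).
        apply (H (S (fst q), snd q)). apply in_map_iff. exists q; auto. }
      split; auto.
      destruct (req f) as [|q r] eqn:E; [exfalso; exact (req_nonempty f E)|].
      specialize (HH q (or_introl eq_refl)).
      apply letter_at_bound in HH; lia.
Qed.

Fixpoint ins (p : nat * letter) (l : list (nat * letter)) :=
  match l with
  | [] => [p]
  | q :: r => if fst p <=? fst q then p :: q :: r else q :: ins p r
  end.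

Definition isort l := fold_right ins [] l.

Lemma ins_in p l x : In x (ins p l) <-> x = p \/ In x l.
Proof.
  induction l as [|q r IH]; simpl.
  - intuition.
  - destruct (fst p <=? fst q); simpl; rewrite ?IH; intuition.
Qed.

Lemma ins_len p l : length (ins p l) = S (length l).
Proof. induction l as [|q r IH]; simpl; auto. destruct (fst p <=? fst q); simpl; auto. Qed.

Fixpoint sorted_from (b : nat) (l : list (nat * letter)) : Prop :=
  match l with
  | [] => True
  | q :: r => b <= fst q /\ sorted_from (fst q) r
  end.

Lemma ins_sorted p l : forall b, sorted_from b l -> b <= fst p -> sorted_from b (ins p l).
Proof.
  induction l as [|q r IH]; simpl; intros b H Hb.
  - auto.
  - destruct (fst p <=? fst q) eqn:E; simpl.
    + apply Nat.leb_le in E. destruct H; repeat split; auto.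
    + apply Nat.leb_gt in E. split; [tauto|]. apply IH; [tauto|lia].
Qed.

Lemma isort_in l x : In x (isort l) <-> In x l.
Proof. unfold isort in *; induction l; simpl; [tauto|]. rewrite ins_in, IHl. split; intros [H|H]; auto. Qed.

Lemma isort_len l : length (isort l) = length l.
Proof. induction l; simpl; auto. rewrite ins_len; auto. Qed.

Lemma isort_sorted l : sorted_from 0 (isort l).
Proof. induction l; simpl; auto. apply ins_sorted; auto; lia. Qed.

Fixpoint build (b : nat) (l : list (nat * letter)) : formula :=
  match l with
  | [] => Atom La
  | q :: r =>
    match r with
    | [] => nextn (fst q - b) (Atom (snd q))
    | _ => nextn (fst q - b) (And (Atom (snd q)) (build (fst q) r))
    end
  end.

Lemma build_pattern l : forall b, is_pattern (build b l).
Proof.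
  induction l as [|q r IH]; intros b; simpl.
  - exact (pat_atom 0 La).
  - destruct r; [apply pat_atom|apply pat_and; apply IH].
Qed.

Lemma size_nextn n f : size (nextn n f) = n + size f.
Proof. induction n; simpl; lia. Qed.

Lemma sat_nextn n f : forall w i, 1 <= i -> (sat w i (nextn n f) <-> sat w (i + n) f).
Proof.
  induction n; intros w i Hi; simpl.
  - rewrite Nat.add_0_r; tauto.
  - rewrite IHn by lia. replace (S i + n) with (i + S n) by lia.
    split; [tauto|]. intros H; split; auto.
    apply sat_bound in H; lia.
Qed.

Lemma sorted_ge l : forall b, sorted_from b l -> forall p, In p l -> b <= fst p.
Proof.
  induction l as [|q r IH]; simpl; intros b H p Hp; [destruct Hp|].
  destruct Hp as [<-|Hp]; [tauto|]. specialize (IH _ (proj2 H) p Hp); lia.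
Qed.

Lemma build_sem l : forall b w i, 1 <= i -> l <> [] -> sorted_from b l ->
  (sat w i (build b l) <-> forall p, In p l -> letter_at w (i + (fst p - b)) = Some (snd p)).
Proof.
  induction l as [|q r IH]; intros b w i Hi Hne Hs; [congruence|].
  simpl in Hs. destruct Hs as [Hb Hs].
  assert (Hge := sorted_ge r _ Hs).
  change (sat w i (match r with
    | [] => nextn (fst q - b) (Atom (snd q))
    | _ => nextn (fst q - b) (And (Atom (snd q)) (build (fst q) r)) end) <->
    forall p, In p (q :: r) -> letter_at w (i + (fst p - b)) = Some (snd p)).
  destruct r as [|q' r'].
  - rewrite sat_nextn by auto. simpl. split.
    + intros H p [<-|[]]; auto.
    + intros H; apply H; auto.
  - rewrite sat_nextn by auto.
    change (sat w (i + (fst q - b)) (Atom (snd q)) /\ sat w (i + (fst q - b)) (build (fst q) (q'::r')) <-> forall p, In p (q :: q' :: r') -> letter_at w (i + (fst p - b)) = Some (snd p)).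
    rewrite IH by (auto; try lia; discriminate).
    split.
    + intros [H1 H2] p [<-|Hp]; auto.
      specialize (H2 p Hp). specialize (Hge p Hp).
      replace (i + (fst p - b)) with (i + (fst q - b) + (fst p - fst q)) by lia. auto.
    + intros H. split; [apply H; left; auto|].
      intros p Hp. specialize (Hge p Hp).
      replace (i + (fst q - b) + (fst p - fst q)) with (i + (fst p - b)) by lia.
      apply H; right; auto.
Qed.

Lemma build_size l : forall b M, l <> [] -> sorted_from b l ->
  (forall p, In p l -> fst p <= M) ->
  size (build b l) + b + 1 <= M + 2 * length l.
Proof.
  induction l as [|q r IH]; intros b M Hne Hs HM; [congruence|].
  simpl in Hs. destruct Hs as [Hb Hs].
  assert (Hq := HM q (or_introl eq_refl)).
  change (size (match r with
    | [] => nextn (fst q - b) (Atom (snd q))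
    | _ => nextn (fst q - b) (And (Atom (snd q)) (build (fst q) r)) end) + b + 1
    <= M + 2 * length (q :: r)).
  destruct r as [|q' r'].
  - rewrite size_nextn; simpl; lia.
  - rewrite size_nextn. simpl size.
    assert (H := IH (fst q) M ltac:(discriminate) Hs (fun p Hp => HM p (or_intror Hp))).
    simpl length in *. simpl in H. lia.
Qed.

Theorem lemma1 : forall phi : formula,
  exists P : formula, is_pattern P /\ equiv P phi /\ size P <= size phi.
Proof.
  intros phi. exists (build 0 (isort (req phi))).
  assert (Hne : isort (req phi) <> []).
  { intro E. apply (f_equal (@length _)) in E. rewrite isort_len in E.
    destruct (req phi) eqn:E2; [exact (req_nonempty phi E2)|discriminate]. }
  split; [apply build_pattern|split].
  - intros w i _ Hi. rewrite build_sem by (auto; try lia; apply isort_sorted).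
    rewrite req_sem by lia. split.
    + intros H p Hp. rewrite <- Nat.sub_0_r with (n := fst p). apply H.
      apply isort_in; auto.
    + intros H p Hp. rewrite Nat.sub_0_r. apply H. apply isort_in; auto.
  - assert (H := build_size (isort (req phi)) 0 (nexts phi) Hne (isort_sorted _)
      (fun p Hp => req_bound phi p (proj1 (isort_in _ _) Hp))).
    rewrite isort_len in H. assert (H2 := size_req phi). lia.
Qed.
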